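(* Let $n\geq 2$ and let $S_n=K_{1,n-1}$ be the star on $n$ vertices, with centre vertex $v$ (a vertex adjacent to all others). Let $c_0:V(S_n)\to\mathbb{Z}$ be any initial chip configuration. Let $\ell_M$ be a leaf with the maximum number of chips in $c_0$ among all leaves and $\ell_m$ a leaf with the minimum number of chips in $c_0$ among all leaves, and let $d_0=c_0(\ell_M)-c_0(\ell_m)$. Then the configuration is tight with pre-period length at most \[\left\lceil\frac{\max \{ 0,\ c_0(v) - c_0(\ell_M),\ c_0(\ell_m) - c_0(v) \}}{n}\right\rceil + 2d_0.\]
   Context: Diffusion process: for a finite simple graph $G$ and a chip configuration $c_t:V(G)\to\mathbb{Z}$ (negative values allowed), the next configuration is defined simultaneously for every vertex $u$ by $c_{t+1}(u)=c_t(u)-|\{w\in N(u): c_t(u)>c_t(w)\}|+|\{w\in N(u): c_t(u)<c_t(w)\}|$. Tight means the process is eventually fixed or eventually periodic with period length 2, i.e. $c_{t+2}=c_t$ for some $t$; the pre-period length is then the least $t\geq0$ with $c_{t+p}=c_t$ where $p$ is the minimal period. *)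

(* Defs.v *)
From mathcomp Require Import all_boot all_order all_algebra.
Set Implicit Arguments. Unset Strict Implicit. Unset Printing Implicit Defensive.
Import Order.TTheory GRing.Theory Num.Theory.
Local Open Scope ring_scope.

Definition simple_graph (T : finType) (adj : rel T) : Prop :=
  irreflexive adj /\ symmetric adj.

Definition diffuse_step (T : finType) (adj : rel T) (c : T -> int) : T -> int :=
  fun u => c u - (#|[set w | adj u w && (c w < c u)]|)%:Z
               + (#|[set w | adj u w && (c u < c w)]|)%:Z.

Definition config (T : finType) (adj : rel T) (c0 : T -> int) (t : nat) : T -> int :=
  iter t (diffuse_step adj) c0.

Definition periodic_from (T : finType) (adj : rel T) (c0 : T -> int) (p t : nat) : Prop :=
  config adj c0 (t + p) = config adj c0 t.

(* Tight: eventually fixed or eventually 2-periodic, i.e. c_{t+2} = c_t for some t. *)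
Definition tight (T : finType) (adj : rel T) (c0 : T -> int) : Prop :=
  exists t, periodic_from adj c0 2 t.

Definition min_period (T : finType) (adj : rel T) (c0 : T -> int) (p : nat) : Prop :=
  (0 < p)%N /\ (exists t, periodic_from adj c0 p t) /\
  forall q, (0 < q)%N -> (exists t, periodic_from adj c0 q t) -> (p <= q)%N.

Definition preperiod (T : finType) (adj : rel T) (c0 : T -> int) (t : nat) : Prop :=
  exists p, min_period adj c0 p /\ periodic_from adj c0 p t /\
    forall s, periodic_from adj c0 p s -> (t <= s)%N.

Definition star_adj (T : finType) (v : T) : rel T :=
  fun x y => (x != y) && ((x == v) || (y == v)).

Definition ceil_div (m n : nat) : nat := ((m + n.-1) %/ n)%N.

(* Main.v *)
Require Import Defs.
From mathcomp Require Import all_boot all_order all_algebra.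
From mathcomp Require Import zify.
From Stdlib Require Import FunctionalExtensionality.
Import Order.TTheory GRing.Theory Num.Theory.
Local Open Scope ring_scope.
Set Implicit Arguments.

Section Star.
Variable n : nat.
Variable v : 'I_n.
Hypothesis hn : (2 <= n)%N.

Local Notation step := (diffuse_step (star_adj v)).

Definition fl (x y : int) : int := if x < y then y - 1 else if y < x then y + 1 else y.

Lemma step_leaf c l : l != v -> step c l = fl (c v) (c l).
Proof.
move=> hl.
have E : forall P : pred 'I_n, [set w | star_adj v l w && P w] = if P v then [set v] else set0.
  move=> P; apply/setP => w; rewrite !inE /star_adj (negbTE hl) /=.
  case: (eqVneq w v) => [->|hw]; first by rewrite hl; case: (P v); rewrite ?inE ?eqxx.
  by rewrite andbF; case: (P v); rewrite ?inE ?(negbTE hw).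
rewrite /diffuse_step (E (fun w => c w < c l)) (E (fun w => c l < c w)) /fl.
case: ltrP => h1; case: ltrP => h2; rewrite ?cards1 ?cards0; lia.
Qed.

Lemma fl_mono x y z : y <= z -> fl x y <= fl x z.
Proof. rewrite /fl; do 4 (case: ltrP => ?); lia. Qed.

Lemma card_le (A : {set 'I_n}) : (forall w, w \in A -> w != v) -> (#|A| <= (n - 1)%N)%N.
Proof.
move=> h; have: A \subset [set~ v] by apply/subsetP => w /h; rewrite !inE.
by move/subset_leq_card; rewrite cardsC1 card_ord subn1.
Qed.

Lemma card_eq (A : {set 'I_n}) : (forall w, w \in A = (w != v)) -> #|A| = (n - 1)%N.
Proof.
move=> h; have ->: A = [set~ v] by apply/setP => w; rewrite h !inE.
by rewrite cardsC1 card_ord subn1.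
Qed.

Lemma center_eq c : step c v = c v - (#|[set w | (v != w) && (c w < c v)%R]|)%:Z
               + (#|[set w | (v != w) && (c v < c w)%R]|)%:Z.
Proof. rewrite /diffuse_step /star_adj eqxx /=. have E : forall P : pred (ordinal n), [set w | (v != w) && true & P w] = [set w | v != w & P w] by move=> P; apply/setP=> w; rewrite !inE andbT. by rewrite (E (fun w => c w < c v)) (E (fun w => c v < c w)). Qed.

Lemma center_bnd c : c v - ((n - 1)%N)%:Z <= step c v <= c v + ((n - 1)%N)%:Z.
Proof.
rewrite center_eq.
set A := [set w | _ & (c w < c v)%R]; set B := [set w | _ & (c v < c w)%R].
have H1 : (#|A| <= (n - 1)%N)%N by apply: card_le => w; rewrite inE eq_sym => /andP[].
have H2 : (#|B| <= (n - 1)%N)%N by apply: card_le => w; rewrite inE eq_sym => /andP[].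
apply/andP; split; lia.
Qed.

Lemma center_above c : (forall l, l != v -> c l < c v) -> step c v = c v - ((n - 1)%N)%:Z.
Proof.
move=> h; rewrite center_eq.
rewrite (@card_eq [set w | (v != w) && (c w < c v)%R]); last first.
  by move=> w; rewrite inE eq_sym; case: (eqVneq w v) => // hw; rewrite h.
have ->: [set w | (v != w) && (c v < c w)%R] = set0.
  apply/setP=> w; rewrite !inE eq_sym; case: (eqVneq w v) => //= hw.
  by rewrite ltNge (ltW (h w hw)).
rewrite cards0; lia.
Qed.

Lemma center_below c : (forall l, l != v -> c v < c l) -> step c v = c v + ((n - 1)%N)%:Z.
Proof.
move=> h; rewrite center_eq.
rewrite (@card_eq [set w | (v != w) && (c v < c w)%R]); last first.
  by move=> w; rewrite inE eq_sym; case: (eqVneq w v) => // hw; rewrite h.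
have ->: [set w | (v != w) && (c w < c v)%R] = set0.
  apply/setP=> w; rewrite !inE eq_sym; case: (eqVneq w v) => //= hw.
  by rewrite ltNge (ltW (h w hw)).
rewrite cards0; lia.
Qed.


Lemma center_fix c : (forall l, l != v -> c l = c v) -> step c v = c v.
Proof.
move=> h; rewrite center_eq.
have ->: [set w | (v != w) && (c w < c v)%R] = set0.
  by apply/setP=> w; rewrite !inE eq_sym; case: (eqVneq w v) => //= hw; rewrite h // ltxx.
have ->: [set w | (v != w) && (c v < c w)%R] = set0.
  by apply/setP=> w; rewrite !inE eq_sym; case: (eqVneq w v) => //= hw; rewrite h // ltxx.
rewrite cards0; lia.
Qed.

Definition bnds (c : 'I_n -> int) (M m : int) :=
  (exists l, l != v /\ c l = M) /\ (exists l, l != v /\ c l = m) /\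
  (forall l, l != v -> m <= c l <= M).

Definition P (c : 'I_n -> int) (B : nat) :=
  exists T, (T <= B)%N /\ iter T.+2 step c = iter T step c.

Lemma P_step c B : P (step c) B -> P c B.+1.
Proof.
case=> T [hT e]; exists T.+1; split => //.
by rewrite iterSr e -iterSr.
Qed.

Lemma P_mono c B B' : (B <= B')%N -> P c B -> P c B'.
Proof. by move=> h [T [hT e]]; exists T; split => //; apply: leq_trans h. Qed.

Lemma bnds_step c M m : bnds c M m -> bnds (step c) (fl (c v) M) (fl (c v) m).
Proof.
case=> [[l1 [h1 e1]] [[l2 [h2 e2]] hb]]; split; [|split].
- by exists l1; split => //; rewrite step_leaf // e1.
- by exists l2; split => //; rewrite step_leaf // e2.
- move=> l hl; rewrite step_leaf //; have /andP[a b] := hb l hl.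
  by rewrite !fl_mono.
Qed.

Lemma fl_bnd x y : y - 1 <= fl x y <= y + 1.
Proof. rewrite /fl; do 2 (case: ltrP => ?); apply/andP; split; lia. Qed.

Lemma fl_shrink x M m : m <= x -> x <= M -> m < M -> fl x M - fl x m <= M - m - 1.
Proof. rewrite /fl => h1 h2 h3; case: (ltrP x M) => ?; case: (ltrP M x) => ?; case: (ltrP x m) => ?; case: (ltrP m x) => ?; lia. Qed.

Lemma fl_up x y : y < x -> fl x y = y + 1.
Proof. by move=> h; rewrite /fl ltNge (ltW h) /= h. Qed.

Lemma fl_down x y : x < y -> fl x y = y - 1.
Proof. by rewrite /fl => ->. Qed.

Lemma bnds_le c M m : bnds c M m -> m <= M.
Proof. case=> [[l [hl e]] [_ hb]]; have /andP[a b] := hb l hl; lia. Qed.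

Lemma fixed c x : bnds c x x -> c v = x -> P c 0.
Proof.
move=> [_ [_ hb]] hx.
have hl : forall l, l != v -> c l = x.
  by move=> l /hb /andP[a b]; apply/eqP; rewrite eq_le a b.
have e : step c = c.
  apply: functional_extensionality => l; case: (eqVneq l v) => [->|h].
    by apply: center_fix => l' /hl ->.
  by rewrite step_leaf // hx (hl l h) /fl ltxx.
by exists 0%N; split => //=; rewrite e e.
Qed.

Lemma far_above c M m : bnds c M m -> M < c v ->
  step c v = c v - ((n - 1)%N)%:Z /\ bnds (step c) (M + 1) (m + 1).
Proof.
move=> hb hM; have hmM := bnds_le hb; split.
  apply: center_above => l hl; case: hb => [_ [_ hb]].
  have /andP[a b] := hb l hl; lia.
have := bnds_step hb; rewrite !fl_up //; lia.
Qed.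

Lemma far_below c M m : bnds c M m -> c v < m ->
  step c v = c v + ((n - 1)%N)%:Z /\ bnds (step c) (M - 1) (m - 1).
Proof.
move=> hb hM; have hmM := bnds_le hb; split.
  apply: center_below => l hl; case: hb => [_ [_ hb]].
  have /andP[a b] := hb l hl; lia.
have := bnds_step hb; rewrite !fl_down //; lia.
Qed.

Lemma term_above c M m : bnds c M m -> M < c v ->
  c v - ((n - 1)%N)%:Z < m + 1 -> P c 0.
Proof.
move=> hb hM hlt; have [e1 hb1] := far_above hb hM.
have [e2 hb2] : step (step c) v = step c v + ((n - 1)%N)%:Z /\ bnds (step (step c)) (M + 1 - 1) (m + 1 - 1).
  by apply: far_below; rewrite // e1.
exists 0%N; split => //=.
apply: functional_extensionality => l; case: (eqVneq l v) => [->|h].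
  by rewrite e2 e1; lia.
rewrite (@step_leaf (step c) l h) (@step_leaf c l h) e1.
case: hb => [_ [_ hb]]; have /andP[a b] := hb l h.
rewrite (@fl_up (c v) (c l)); last lia.
rewrite fl_down; lia.
Qed.

Lemma term_below c M m : bnds c M m -> c v < m ->
  M - 1 < c v + ((n - 1)%N)%:Z -> P c 0.
Proof.
move=> hb hM hlt; have [e1 hb1] := far_below hb hM.
have [e2 hb2] : step (step c) v = step c v - ((n - 1)%N)%:Z /\ bnds (step (step c)) (M - 1 + 1) (m - 1 + 1).
  by apply: far_above; rewrite // e1.
exists 0%N; split => //=.
apply: functional_extensionality => l; case: (eqVneq l v) => [->|h].
  by rewrite e2 e1; lia.
rewrite (@step_leaf (step c) l h) (@step_leaf c l h) e1.
case: hb => [_ [_ hb]]; have /andP[a b] := hb l h.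
rewrite (@fl_down (c v) (c l)); last lia.
rewrite fl_up; lia.
Qed.


Lemma inside D : forall c M m, bnds c M m -> m <= c v <= M -> M - m <= D%:Z -> P c (2 * D).
Proof.
elim: D => [|D IH] c M m hb /andP[h1 h2] hD.
  have e : m = M by have := bnds_le hb; lia.
  rewrite e in hb; apply: (fixed hb); lia.
case: (ltrP m M) => hmM; last first.
  have e : m = M by have := bnds_le hb; lia.
  rewrite e in hb; apply: P_mono (fixed hb _) => //; lia.
have hb1 := bnds_step hb.
have hs := @fl_shrink (c v) M m h1 h2 hmM.
have /andP[a1 a2] := fl_bnd (c v) M.
have /andP[b1 b2] := fl_bnd (c v) m.
have /andP[c1 c2] := center_bnd c.
have hl1 := bnds_le hb1.
case: (ltrP (fl (c v) M) (step c v)) => hA.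
  case: (ltrP (step c v - ((n - 1)%N)%:Z) (fl (c v) m + 1)) => hT.
    apply: P_mono (P_step (term_above hb1 hA hT)); lia.
  have [e2 hb2] := far_above hb1 hA.
  apply: P_mono (P_step (P_step (IH _ _ _ hb2 _ _))); [lia| |lia].
  rewrite e2; apply/andP; split; lia.
case: (ltrP (step c v) (fl (c v) m)) => hB.
  case: (ltrP (fl (c v) M - 1) (step c v + ((n - 1)%N)%:Z)) => hT.
    apply: P_mono (P_step (term_below hb1 hB hT)); lia.
  have [e2 hb2] := far_below hb1 hB.
  apply: P_mono (P_step (P_step (IH _ _ _ hb2 _ _))); [lia| |lia].
  rewrite e2; apply/andP; split; lia.
apply: P_mono (P_step (IH _ _ _ hb1 _ _)); [lia| |lia].
apply/andP; split; lia.
Qed.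

Lemma phase k : forall c M m (D : nat), bnds c M m -> M - m <= D%:Z ->
  c v - M <= (k * n)%N%:Z -> m - c v <= (k * n)%N%:Z -> P c (k + 2 * D).
Proof.
elim: k => [|k IH] c M m D hb hD hu hd.
  by apply: inside hb _ hD; apply/andP; split; lia.
have hmM := bnds_le hb.
case: (ltrP M (c v)) => hA.
  case: (ltrP (c v - ((n - 1)%N)%:Z) (m + 1)) => hT.
    apply: P_mono (term_above hb hA hT); lia.
  have [e1 hb1] := far_above hb hA.
  case: (ltrP (c v - M) (n%:Z)) => hg.
  - apply: P_mono (P_step (@inside D _ _ _ hb1 _ _)); [lia| |lia].
    rewrite e1; apply/andP; split; lia.
  - apply: P_mono (P_step (IH _ _ _ D hb1 _ _ _)); [lia|lia| |]; rewrite e1; lia.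
case: (ltrP (c v) m) => hB.
  case: (ltrP (M - 1) (c v + ((n - 1)%N)%:Z)) => hT.
    apply: P_mono (term_below hb hB hT); lia.
  have [e1 hb1] := far_below hb hB.
  case: (ltrP (m - c v) (n%:Z)) => hg.
  - apply: P_mono (P_step (@inside D _ _ _ hb1 _ _)); [lia| |lia].
    rewrite e1; apply/andP; split; lia.
  - apply: P_mono (P_step (IH _ _ _ D hb1 _ _ _)); [lia|lia| |]; rewrite e1; lia.
apply: P_mono (@inside D _ _ _ hb _ hD); [lia|].
apply/andP; split; lia.
Qed.

End Star.

Section Gen.
Variable T' : finType.
Variable adj : rel T'.
Variable c0 : T' -> int.
Local Notation cfg := (config adj c0).

Lemma cfg_add a j : cfg (j + a) = iter j (diffuse_step adj) (cfg a).
Proof. by rewrite /config iterD. Qed.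

Lemma per_shift t p : cfg (t + p) = cfg t -> forall j, cfg (t + j + p) = cfg (t + j).
Proof. by move=> e j; rewrite (addnC t j) -addnA (cfg_add (t + p) j) (cfg_add t j) e. Qed.

Lemma per_mult t p : cfg (t + p) = cfg t -> forall k, cfg (t + k * p) = cfg t.
Proof.
move=> e; elim=> [|k IH]; first by rewrite mul0n addn0.
by rewrite mulSnr addnA (@per_shift t p e) IH.
Qed.

Definition pfx p s := [forall i, cfg (s + p) i == cfg s i].

Lemma pfxP p s : reflect (periodic_from adj c0 p s) (pfx p s).
Proof.
apply: (iffP forallP) => h.
  by apply: functional_extensionality => i; apply/eqP.
by move=> i; rewrite /periodic_from in h; rewrite h.
Qed.

Lemma gen_pre T : cfg (T + 2) = cfg T -> exists t, preperiod adj c0 t /\ (t <= T)%N.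
Proof.
move=> e2.
case: (boolP (pfx 1 T)) => h1.
  have ex : exists s, pfx 1 s by exists T.
  case: (ex_minnP ex) => t ht hmin.
  exists t; split; last exact: hmin.
  exists 1%N; split; [split; [by []| split]|split].
  - by exists t; apply/pfxP.
  - by move=> q.
  - by apply/pfxP.
  - by move=> s /pfxP /hmin.
have ex : exists s, pfx 2 s by exists T; apply/pfxP.
case: (ex_minnP ex) => t ht hmin.
exists t; split; last by apply: hmin; apply/pfxP.
exists 2%N; split; [split; [by []| split]|split].
- by exists t; apply/pfxP.
- move=> q q0 [s hs]; case: q q0 hs => [//|[|q]] _ // hs.
  exfalso; move/negP: h1; apply; apply/pfxP; rewrite /periodic_from.
  have hc : forall j, cfg (s + j) = cfg s.
    by move=> j; have := @per_mult s 1 hs j; rewrite muln1.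
  have e3 : cfg (T + 1 + 2) = cfg (T + 1) by rewrite (@per_shift T 2 e2 1).
  have A := @per_mult T 2 e2 s; have B := @per_mult (T + 1) 2 e3 s.
  have eA : (T + s * 2 = s + (T + s))%N by lia.
  rewrite eA in A.
  have eB : (T + 1 + s * 2 = s + (T + s + 1))%N by lia.
  rewrite eB in B.
  by rewrite -B -A !hc.
- by apply/pfxP.
- by move=> s /pfxP /hmin.
Qed.

End Gen.

Theorem theorem19 (n : nat) (hn : (2 <= n)%N) (v : 'I_n) (c0 : 'I_n -> int)
    (lM lm : 'I_n) (hlM : lM != v) (hlm : lm != v)
    (hmax : forall l : 'I_n, l != v -> c0 l <= c0 lM)
    (hmin : forall l : 'I_n, l != v -> c0 lm <= c0 l) :
  tight (star_adj v) c0 /\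
  exists t : nat, preperiod (star_adj v) c0 t /\
    (t <= ceil_div (absz (Num.max (0:int) (Num.max (c0 v - c0 lM) (c0 lm - c0 v)))%R) n
            + 2 * absz (c0 lM - c0 lm)%R)%N.
Proof.
set X := Num.max (0:int) (Num.max (c0 v - c0 lM) (c0 lm - c0 v)).
set G := absz X.
set k := ceil_div G n.
set D := absz (c0 lM - c0 lm).
have hX0 : 0 <= X by rewrite /X le_max lexx.
have hXa : c0 v - c0 lM <= X by rewrite /X !le_max lexx orbT.
have hXb : c0 lm - c0 v <= X by rewrite /X !le_max lexx !orbT.
have hG : G%:Z = X by rewrite /G gez0_abs.
have hGk : (G <= k * n)%N.
  rewrite /k /ceil_div.
  have h1 := divn_eq (G + n.-1) n.
  have h2 : ((G + n.-1) %% n < n)%N by rewrite ltn_pmod //; lia.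
  nia.
have hb : bnds v c0 (c0 lM) (c0 lm).
  split; [by exists lM|split; [by exists lm|]].
  by move=> l hl; rewrite hmax // hmin.
have hD : c0 lM - c0 lm <= D%:Z by rewrite /D abszE ler_norm.
have hP := @phase n v hn k _ _ _ D hb hD.
have [T [hT e]] : P v c0 (k + 2 * D).
  apply: hP; lia.
have e2 : config (star_adj v) c0 (T + 2) = config (star_adj v) c0 T.
  by rewrite /config addn2.
split; first by exists T.
have [t [ht htT]] := @gen_pre _ (star_adj v) c0 T e2.
exists t; split => //; lia.
Qed.
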